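(* There is an absolute constant $c>0$ such that the following holds. Let $n\ge2$, let $\varepsilon\in[0,\frac{1}{2\ln n}]$, and let $P\subset\mathbb{H}^2$ be a set of $n$ points equally spaced (i.e., consecutive points subtending equal angles $2\pi/n$ at the centre) on a hyperbolic circle of radius $3\ln n$. Then every $(2+\varepsilon)$-spanner for $P$, i.e., every geometric graph $G$ with vertex set $P$ satisfying $\mathrm{dist}_G(u,v)\le(2+\varepsilon)|uv|$ for all $u,v\in P$, has at least $c\, n\log n$ edges.
   Context: $\mathbb{H}^2$ is the hyperbolic plane of curvature $-1$, $|uv|$ hyperbolic distance. A geometric graph has each edge weighted by the distance between its endpoints; $\mathrm{dist}_G$ is shortest-path length in $G$. *)

(* Defs.v *)
From Stdlib Require Import Reals.
From mathcomp Require Import all_boot.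

Set Implicit Arguments.
Unset Strict Implicit.
Unset Printing Implicit Defensive.

Local Open Scope R_scope.

Definition acosh (x : R) : R := ln (x + sqrt (x * x - 1)).

(* Hyperboloid model of H^2 (curvature -1):
   points (x0,x1,x2) with x0^2 - x1^2 - x2^2 = 1, x0 > 0. *)
Definition hpoint : Type := (R * R * R)%type.

Definition on_hyperboloid (p : hpoint) : Prop :=
  let '(x0, x1, x2) := p in x0 * x0 - x1 * x1 - x2 * x2 = 1 /\ 0 < x0.

Definition hdist (p q : hpoint) : R :=
  let '(x0, x1, x2) := p in
  let '(y0, y1, y2) := q in
  acosh (x0 * y0 - x1 * y1 - x2 * y2).

(* Point at hyperbolic distance r from the base point o = (1,0,0),
   in direction (angle) t. *)
Definition hcenter : hpoint := (1, 0, 0).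
Definition circle_pt (r t : R) : hpoint := (cosh r, sinh r * cos t, sinh r * sin t).

Definition equi_pt (n : nat) (r th0 : R) (k : 'I_n) : hpoint :=
  circle_pt r (th0 + 2 * PI * INR (nat_of_ord k) / INR n).

(* Undirected geometric graph on vertex set P = {pt k | k : 'I_n};
   an undirected edge {i,j} is present iff E i j || E j i. *)
Definition adj (n : nat) (E : rel 'I_n) : rel 'I_n := fun i j => E i j || E j i.

Fixpoint walk_len (n : nat) (pt : 'I_n -> hpoint) (x : 'I_n) (s : seq 'I_n) : R :=
  match s with
  | [::] => 0
  | y :: s' => hdist (pt x) (pt y) + walk_len pt y s'
  end.

(* G is a t-spanner: dist_G(u,v) <= t |uv| for all u, v, i.e. there is a walk
   in G from u to v of length at most t |uv| (the shortest path length is a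
   minimum over finitely many simple paths, so this is equivalent). *)
Definition is_spanner (n : nat) (pt : 'I_n -> hpoint) (E : rel 'I_n) (t : R) : Prop :=
  forall u v : 'I_n, exists s : seq 'I_n,
    path (adj E) u s /\ last u s = v /\ walk_len pt u s <= t * hdist (pt u) (pt v).

Definition num_edges (n : nat) (E : rel 'I_n) : nat :=
  #|[set p : 'I_n * 'I_n | (p.1 < p.2)%N && adj E p.1 p.2]|.

(* Main.v *)
Require Import Defs.
From Stdlib Require Import Reals Lra Psatz.
From mathcomp Require Import all_boot zify.

Section Comb.
Local Set Implicit Arguments. Local Unset Strict Implicit.

Lemma sh_lt n K (u : 'I_n) : (K <= n)%N -> ((if (u + K < n)%N then u + K else u + K - n) < n)%N.
Proof. move=> h. have := ltn_ord u. case: ifP; lia. Qed.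

Definition sh n K (h : (K <= n)%N) (u : 'I_n) : 'I_n := Ordinal (sh_lt u h).

Lemma sh_inj n K (h : (K <= n)%N) : injective (sh h).
Proof.
move=> u w /(congr1 val) /=. have := ltn_ord u. have := ltn_ord w.
case: ifP; case: ifP => *; apply: val_inj => /=; lia.
Qed.

Lemma sh_neq n K (h : (K <= n)%N) (u : 'I_n) : (0 < K < n)%N -> sh h u != u.
Proof.
move=> hK. apply/eqP => /(congr1 val) /=. have := ltn_ord u. case: ifP; lia.
Qed.

Lemma adjS n (E : rel 'I_n) a b : adj E a b = adj E b a.
Proof. by rewrite /adj orbC. Qed.

Definition Eset n (E : rel 'I_n) (P : 'I_n -> 'I_n -> bool) : {set 'I_n * 'I_n} :=
  [set p : 'I_n * 'I_n | (p.1 < p.2)%N && adj E p.1 p.2 && P p.1 p.2].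

Lemma count_scale n (E : rel 'I_n) (P : 'I_n -> 'I_n -> bool) K (hK : (K <= n)%N) :
  (forall x z, P x z = P z x) -> (forall x, P x x = false) ->
  (forall u, exists x z, (x = u \/ x = sh hK u) /\ adj E x z /\ P x z) ->
  (n <= 4 * #|Eset E P|)%N.
Proof.
move=> Psym Pirr Hu.
set S := [set x | [exists z, adj E x z && P x z]].
set T := ~: S.
have disj : T :&: (sh hK @: T) = set0.
{ apply/setP => x. rewrite !inE. apply/negP => /andP [hx /imsetP [u hu ex]].
  have [x0 [z [hx0 [ha hp]]]] := Hu u.
  have : x0 \in S by rewrite inE; apply/existsP; exists z; rewrite ha hp.
  case: hx0 => ->.
  - by rewrite inE in hu; move: hu; rewrite inE => /negP.
  - rewrite -ex. by move: hx; rewrite inE => /negP. }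
have cT : (2 * #|T| <= n)%N.
{ have := cardsU T (sh hK @: T). rewrite disj cards0 (card_imset _ (@sh_inj n K hK)).
  have := max_card (T :|: sh hK @: T). rewrite card_ord. lia. }
have cS : (#|S| + #|T| = n)%N by rewrite cardsC card_ord.
set Es := Eset E P.
have sub : S \subset (fst @: Es) :|: (snd @: Es).
{ apply/subsetP => x. rewrite inE => /existsP [z /andP [ha hp]].
  case: (ltngtP x z) => h.
  - rewrite inE. apply/orP; left. apply/imsetP. exists (x, z) => //.
    by rewrite inE /= h ha hp.
  - rewrite inE. apply/orP; right. apply/imsetP. exists (z, x) => //.
    by rewrite inE /= h adjS ha Psym hp.
  - have e : x = z by apply: val_inj. by rewrite e Pirr in hp. }
have := subset_leq_card sub.
have := cardsU (fst @: Es) (snd @: Es).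
have := leq_imset_card fst Es. have := leq_imset_card snd Es.
move=> h1 h2 h3 h4.
have h5 : (#|fst @: Es :|: snd @: Es| <= #|fst @: Es| + #|snd @: Es|)%N by rewrite cardsU leq_subr.
have h6 : (#|S| <= #|fst @: Es| + #|snd @: Es|)%N := leq_trans h4 h5.
have h7 : (#|fst @: Es| + #|snd @: Es| <= 2 * #|Es|)%N.
{ rewrite mul2n -addnn. apply: leq_add. exact: leq_imset_card. exact: leq_imset_card. }
lia.
Qed.

Definition Uset n (E : rel 'I_n) (P : nat -> 'I_n -> 'I_n -> bool) k : {set 'I_n * 'I_n} :=
  [set p : 'I_n * 'I_n | (p.1 < p.2)%N && adj E p.1 p.2 && has (fun j => P j p.1 p.2) (iota 0 k)].

Lemma sum_scales n (E : rel 'I_n) (P : nat -> 'I_n -> 'I_n -> bool) m :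
  (forall j j' x z, P j x z -> P j' x z -> j = j') ->
  (forall j, (j < m)%N -> (n <= 4 * #|Eset E (P j)|)%N) ->
  (m * n <= 4 * num_edges E)%N.
Proof.
move=> Pdis Hj.
have key : forall k, (k <= m)%N -> (k * n <= 4 * #|Uset E P k|)%N.
{ elim=> [|k IH] hk. by rewrite mul0n.
  have e : Uset E P k.+1 = Uset E P k :|: Eset E (P k).
  { apply/setP => p.
    have ei : iota 0 k.+1 = iota 0 k ++ [:: k] by rewrite -addn1 iotaD.
    rewrite !inE ei has_cat /= orbF.
    by rewrite andb_orr. }
  have d : Uset E P k :&: Eset E (P k) = set0.
  { apply/setP => p. rewrite !inE. apply/negP => /andP [/andP [_ /hasP [j hj pj]] /andP [_ pk]].
    have := Pdis _ _ _ _ pj pk. move: hj; rewrite mem_iota. lia. }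
  have := cardsU (Uset E P k) (Eset E (P k)). rewrite -e d cards0.
  have := IH (ltnW hk). have := Hj k hk. lia. }
have := key m (leqnn m).
have : (#|Uset E P m| <= num_edges E)%N.
{ apply: subset_leq_card. apply/subsetP => p. rewrite !inE. by case/andP. }
lia.
Qed.

End Comb.

Local Open Scope R_scope.

Lemma ln_le_inv a b : 0 < a -> 0 < b -> ln a <= ln b -> a <= b.
Proof.
intros Ha Hb H. destruct (Rle_or_lt a b) as [h|h]; auto.
exfalso. pose proof (ln_increasing b a Hb h). lra.
Qed.

Lemma ln_le' a b : 0 < a -> a <= b -> ln a <= ln b.
Proof.
intros Ha H. destruct (Req_dec a b) as [->|h]; first lra.
left; apply ln_increasing; lra.
Qed.

Lemma exp_ub x : x < 1 -> exp x <= / (1 - x).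
Proof.
intros H. pose proof (exp_ineq1_le (- x)). rewrite exp_Ropp in H0.
pose proof (exp_pos x).
apply Rmult_le_reg_l with (1 - x). lra.
rewrite Rinv_r; last lra.
apply Rmult_le_reg_r with (/ exp x). apply Rinv_0_lt_compat; lra.
rewrite Rmult_assoc Rinv_r; lra.
Qed.

Lemma ln_1px x : 0 <= x -> ln (1 + x) <= x.
Proof.
intros H. rewrite -{2}(ln_exp x). apply ln_le'. lra. apply exp_ineq1_le.
Qed.

Lemma ln2_ge : 1/2 <= ln 2.
Proof.
rewrite -(ln_exp (1/2)). apply ln_le'. apply exp_pos.
pose proof (exp_ub (1/2)). lra.
Qed.

Lemma exp4_le : exp 4 <= 81.
Proof.
replace 4 with (1+1+1+1) by ring. rewrite !exp_plus.
pose proof exp_le_3. pose proof (exp_pos 1). 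
assert (exp 1 * exp 1 <= 9) by nra. nra.
Qed.

Lemma ln39 : 1.02 <= ln 3.9.
Proof.
rewrite -(ln_exp 1.02). apply ln_le'. apply exp_pos.
replace 1.02 with (1 + 0.02) by lra. rewrite exp_plus.
pose proof exp_le_3. pose proof (exp_ub 0.02). pose proof (exp_pos 1).
pose proof (exp_pos 0.02).
assert (exp 0.02 <= 1/0.98) by (unfold Rdiv; rewrite Rmult_1_l; replace 0.98 with (1-0.02) by lra; lra).
nra.
Qed.

Definition acoshQ := Defs.acosh.

Lemma acosh_facts Q : 1 <= Q ->
  0 < Q + sqrt (Q*Q - 1) /\ Q <= Q + sqrt (Q*Q-1) /\ Q + sqrt (Q*Q-1) <= 2*Q
  /\ 2*Q - 1 <= Q + sqrt (Q*Q-1).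
Proof.
intros H. 
assert (h1: 0 <= sqrt (Q*Q-1)) by apply sqrt_pos.
assert (h2: sqrt (Q*Q-1) <= Q).
{ apply Rle_trans with (sqrt (Q*Q)). apply sqrt_le_1_alt; lra. rewrite sqrt_square; lra. }
assert (h3: Q - 1 <= sqrt (Q*Q-1)).
{ rewrite -(sqrt_square (Q-1)); last lra. apply sqrt_le_1_alt. nra. }
lra.
Qed.

Lemma acosh_lb Q : 1 <= Q -> ln Q <= acosh Q.
Proof. intros H; destruct (acosh_facts Q H) as (?&?&?&?). unfold acosh. apply ln_le'; lra. Qed.
Lemma acosh_lb2 Q : 1 <= Q -> ln (2*Q-1) <= acosh Q.
Proof. intros H; destruct (acosh_facts Q H) as (?&?&?&?). unfold acosh. apply ln_le'; lra. Qed.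
Lemma acosh_ub Q : 1 <= Q -> acosh Q <= ln (2*Q).
Proof. intros H; destruct (acosh_facts Q H) as (?&?&?&?). unfold acosh. apply ln_le'; lra. Qed.
Lemma acosh_1 : acosh 1 = 0.
Proof. unfold acosh. replace (1*1-1) with 0 by ring. rewrite sqrt_0 Rplus_0_r. apply ln_1. Qed.
Lemma acosh_ge0 Q : 1 <= Q -> 0 <= acosh Q.
Proof. intros H. pose proof (acosh_lb Q H). pose proof (ln_le' 1 Q ltac:(lra) H). rewrite ln_1 in H1. lra. Qed.

Lemma cosh_sinh r : cosh r * cosh r - sinh r * sinh r = 1.
Proof.
unfold cosh, sinh. 
assert (exp r * exp (-r) = 1) by (rewrite -exp_plus; replace (r + -r) with 0 by ring; apply exp_0).
nra.
Qed.

Lemma hdist_circle r a b :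
  hdist (circle_pt r a) (circle_pt r b) = acosh (1 + sinh r * sinh r * (1 - cos (a - b))).
Proof.
unfold hdist, circle_pt. f_equal. rewrite cos_minus. pose proof (cosh_sinh r). nra.
Qed.


Definition yc (x z : R) := 1 - cos (x - z).

Lemma yc_chord a b : 2 * yc a b = (cos a - cos b)^2 + (sin a - sin b)^2.
Proof.
unfold yc. rewrite cos_minus. pose proof (sin2_cos2 a). pose proof (sin2_cos2 b).
unfold Rsqr in *. nra.
Qed.

Lemma yc_sym a b : yc a b = yc b a.
Proof. unfold yc. replace (b - a) with (-(a-b)) by ring. rewrite cos_neg. reflexivity. Qed.

Lemma yc_ge0 a b : 0 <= yc a b.
Proof. unfold yc. pose proof (COS_bound (a - b)). lra. Qed.

Lemma tri_alg p1 p2 q1 q2 u v w : 2*u = p1^2+p2^2 -> 2*v = q1^2+q2^2 ->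
  2*w = (p1+q1)^2+(p2+q2)^2 -> w <= u + v + 2 * sqrt (u * v).
Proof.
intros H1 H2 H3.
assert (Hd: (p1*q1+p2*q2)/2 <= sqrt (u * v)).
{ destruct (Rle_or_lt ((p1*q1+p2*q2)/2) 0) as [h|h].
  - pose proof (sqrt_pos (u*v)). lra.
  - rewrite -(sqrt_square ((p1*q1+p2*q2)/2)); last lra.
    apply sqrt_le_1_alt.
    assert (E: u * v = (p1^2+p2^2)*(q1^2+q2^2)/4).
    { replace u with ((p1^2+p2^2)/2) by lra. replace v with ((q1^2+q2^2)/2) by lra. field. }
    rewrite E. assert (0 <= (p1*q2-p2*q1)^2) by apply pow2_ge_0.
    assert (I: (p1^2+p2^2)*(q1^2+q2^2) = (p1*q1+p2*q2)^2 + (p1*q2-p2*q1)^2) by ring.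
    rewrite I. replace ((p1 * q1 + p2 * q2) / 2 * ((p1 * q1 + p2 * q2) / 2)) with ((p1*q1+p2*q2)^2/4) by field.
    lra. }
nra.
Qed.

Lemma chord_tri a b c : yc a c <= yc a b + yc b c + 2 * sqrt (yc a b * yc b c).
Proof.
apply (tri_alg (cos a - cos b) (sin a - sin b) (cos b - cos c) (sin b - sin c)).
apply yc_chord. apply yc_chord.
rewrite yc_chord. ring.
Qed.


Lemma max_bounds ya yb Y : 0 <= ya -> 0 <= yb -> 0 <= Y -> yb <= ya ->
  ya*yb <= 1296*Y^2 ->
  Y <= ya + yb + 2 * sqrt (ya * yb) ->
  ya <= Y + yb + 2 * sqrt (Y * yb) -> Y/4 <= ya /\ ya <= 49*Y.
Proof.
intros h1 h2 h3 h4 h5 h6 h7.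
assert (sqrt (ya*yb) <= ya).
{ apply Rle_trans with (sqrt (ya*ya)). apply sqrt_le_1_alt; nra. rewrite sqrt_square; lra. }
assert (yb <= 36*Y) by nra.
assert (sqrt (Y*yb) <= 6*Y).
{ apply Rle_trans with (sqrt ((6*Y)*(6*Y))). apply sqrt_le_1_alt; nra. rewrite sqrt_square; lra. }
split; lra.
Qed.

Lemma two_step S Y ya yb eps : 0 < S -> 1 <= S*Y -> 0 <= ya -> 0 <= yb -> 0 <= eps ->
  eps * acosh (1+S*Y) <= 4 ->
  acosh (1+S*ya) + acosh (1+S*yb) <= (2+eps) * acosh (1+S*Y) ->
  ya*yb <= 1296*Y^2.
Proof.
intros hS hSY ha hb he h4 H.
have La := acosh_lb (1+S*ya) ltac:(nra).
have Lb := acosh_lb (1+S*yb) ltac:(nra).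
have LY := acosh_ub (1+S*Y) ltac:(nra).
assert (HL: ln ((1+S*ya)*(1+S*yb)) <= ln ((2*(1+S*Y))*(2*(1+S*Y))*exp 4)).
{ rewrite ln_mult; try nra. rewrite ln_mult; try nra. 2: apply exp_pos.
  rewrite ln_mult; try nra. rewrite ln_exp.
  assert ((2+eps)*acosh (1+S*Y) = 2*acosh (1+S*Y) + eps*acosh (1+S*Y)) by ring. lra. }
assert (P1: 0 < (1+S*ya)*(1+S*yb)) by (apply Rmult_lt_0_compat; nra).
assert (P2: 0 < (2*(1+S*Y))*(2*(1+S*Y))*exp 4) by (apply Rmult_lt_0_compat; [nra | apply exp_pos]).
have H0 := ln_le_inv _ _ P1 P2 HL.
pose proof exp4_le. pose proof (exp_pos 4).
assert (S*S*(ya*yb) <= S*S*(1296*Y^2)) by nra.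
apply Rmult_le_reg_l with (S*S). nra. lra.
Qed.


Lemma PI_gt3 : 3 < PI.
Proof. pose proof PI2_3_2. lra. Qed.

Lemma sin_lo z : 0 <= z -> z <= PI -> z - z^3/6 <= sin z.
Proof.
intros h1 h2. destruct (sin_bound z 0 h1 h2) as [H _].
replace (z - z^3/6) with (sin_approx z (2*0+1)); auto.
unfold sin_approx, sin_term. simpl. field.
Qed.

Lemma sin_hi z : 0 <= z -> z <= 2 -> sin z <= z.
Proof.
intros h1 h2. pose proof PI_gt3. destruct (sin_bound z 0 h1 ltac:(lra)) as [_ H2].
apply Rle_trans with (sin_approx z (2*(0+1))); auto.
replace (sin_approx z (2*(0+1))) with (z - z^3/6 + z^5/120).
2: { unfold sin_approx, sin_term. simpl. field. }
assert (z^5/120 <= z^3/6).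
{ assert (z^5 = z^3*(z*z)) by ring. assert (0 <= z^3) by (apply pow_le; lra).
  rewrite H0. assert (z*z <= 4) by nra. nra. }
lra.
Qed.

Lemma cube_le x c : 0 <= x -> x*x <= c -> x^3 <= c*x.
Proof. intros h1 h2. replace (x^3) with ((x*x)*x) by ring. apply Rmult_le_compat_r; lra. Qed.

Lemma one_m_cos2 z : 1 - cos (2*z) = 2 * sin z ^2.
Proof. rewrite cos_2a_sin. ring. Qed.

Lemma scale_y K N : 1 <= K -> 2*K <= N ->
  2*(K/N)^2 <= 1 - cos (2*PI*K/N) <= 32*(K/N)^2.
Proof.
intros hK hN. pose proof PI_gt3. pose proof PI_4.
replace (2*PI*K/N) with (2*(PI*(K/N))) by (field; lra).
rewrite one_m_cos2.
assert (h0: 0 < K/N) by (apply Rdiv_lt_0_compat; lra).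
assert (h1: K/N <= 1/2) by (apply Rmult_le_reg_r with N; [lra|]; unfold Rdiv; rewrite Rmult_assoc Rinv_l; lra).
set r := K/N in h0 h1 *.
assert (hz: 0 <= PI*r <= 2) by nra.
have Hs := sin_hi (PI*r) ltac:(lra) ltac:(lra).
have Hl := sin_lo (PI*r) ltac:(lra) ltac:(lra).
assert (Hl': PI*r/3 <= sin (PI*r)).
{ assert ((PI*r)^3/6 <= 2*(PI*r)/3).
  { have := cube_le (PI*r) 4 ltac:(lra) ltac:(nra). lra. }
  lra. }
split.
- assert (3*r <= PI*r) by (apply Rmult_le_compat_r; lra).
  assert (r <= sin (PI*r)) by lra.
  have := pow_incr r (sin (PI*r)) 2 ltac:(lra). lra.
- assert (0 <= sin (PI*r)) by (assert (0 <= PI*r/3) by nra; lra).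
  have := pow_incr (sin (PI*r)) (PI*r) 2 ltac:(lra).
  assert ((PI*r)^2 = PI^2 * r^2) by ring.
  assert (PI^2 <= 16) by nra. assert (0 <= r^2) by apply pow2_ge_0. nra.
Qed.

Lemma sin_minstep N : 2 <= N -> (N = 2 \/ 3 <= N) -> 2/N <= sin (PI/N).
Proof.
intros hN [->|h3].
- replace (2/2) with 1 by field. rewrite sin_PI2. lra.
- pose proof PI_gt3. pose proof PI_4.
  assert (ha: 3/N <= PI/N) by (apply Rmult_le_compat_r; [apply Rlt_le, Rinv_0_lt_compat; lra| lra]).
  assert (hb: PI/N <= 4/3).
  { apply Rmult_le_reg_r with N; [lra|]. unfold Rdiv; rewrite Rmult_assoc Rinv_l; lra. }
  assert (hc: 0 <= PI/N) by (apply Rlt_le, Rdiv_lt_0_compat; lra).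
  have Hl := sin_lo (PI/N) hc ltac:(lra).
  set a := PI/N in ha hb hc Hl *.
  assert (a^3/6 <= 8/27*a).
  { have := cube_le a (16/9) ltac:(lra) ltac:(nra). lra. }
  assert (2/N <= 19/27 * (3/N)).
  { unfold Rdiv. assert (0 < /N) by (apply Rinv_0_lt_compat; lra). nra. }
  nra.
Qed.

Lemma ymin d N : 2 <= N -> (N = 2 \/ 3 <= N) -> 1 <= d -> d <= N - 1 ->
  8/(N*N) <= 1 - cos (2*PI*d/N).
Proof.
intros hN hc hd1 hd2. pose proof PI_gt3.
replace (2*PI*d/N) with (2*(PI*d/N)) by (field; lra).
rewrite one_m_cos2.
have Hm := sin_minstep N hN hc.
assert (hpos: 0 < 2/N) by (apply Rdiv_lt_0_compat; lra).
set a := PI/N in Hm *.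
assert (ha: a <= PI * d / N) by (unfold a; apply Rmult_le_compat_r; [apply Rlt_le, Rinv_0_lt_compat; lra| nra]).
assert (hb: PI * d / N <= PI - a).
{ unfold a. replace (PI - PI/N) with (PI*(N-1)/N) by (field; lra).
  apply Rmult_le_compat_r; [apply Rlt_le, Rinv_0_lt_compat; lra| nra]. }
assert (a <= PI/2).
{ unfold a. apply Rmult_le_compat_l; [lra|]. apply Rinv_le_contravar; lra. }
assert (0 < a) by (unfold a; apply Rdiv_lt_0_compat; lra).
assert (Hs: sin a <= sin (PI*d/N)).
{ destruct (Rle_or_lt (PI*d/N) (PI/2)).
  - apply sin_incr_1; lra.
  - rewrite -(sin_PI_x (PI*d/N)). apply sin_incr_1; lra. }
assert (E8: 8/(N*N) = 2*((2/N)*(2/N))) by (field; lra).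
rewrite E8. have := pow_incr (2/N) (sin (PI*d/N)) 2 ltac:(lra). simpl. lra.
Qed.


Lemma sinh3 N : 0 < N -> sinh (3 * ln N) = (N^3 - / N^3)/2.
Proof.
intros h. unfold sinh. rewrite exp_Ropp.
replace (3 * ln N) with (ln N + ln N + ln N) by ring.
rewrite !exp_plus exp_ln; auto. simpl. f_equal. f_equal. ring. f_equal. ring.
Qed.

Definition SS N := sinh (3 * ln N) * sinh (3 * ln N).

Lemma SS_eq N : 0 < N -> 4 * SS N = N^6 - 2 + / N^6.
Proof.
intros h. unfold SS. rewrite sinh3; auto.
replace (N^6) with (N^3*N^3) by ring. field. lra.
Qed.

Lemma inv6_le N : 2 <= N -> 0 < / N^6 <= 1/64.
Proof.
intros h. assert (64 <= N^6).
{ replace 64 with (2^6) by (simpl; ring). apply pow_incr. lra. }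
split. apply Rinv_0_lt_compat; lra.
unfold Rdiv. rewrite Rmult_1_l. apply Rinv_le_contravar; lra.
Qed.

Lemma SS_lb N : 2 <= N -> N^6 - 2 <= 4 * SS N /\ 4 * SS N <= N^6 /\ 0 < SS N.
Proof.
intros h. have E := SS_eq N ltac:(lra). pose proof (inv6_le N h).
assert (64 <= N^6) by (replace 64 with (2^6) by (simpl; ring); apply pow_incr; lra).
lra.
Qed.

Lemma lnN_ge N : 2 <= N -> 1/2 <= ln N.
Proof. intros h. pose proof ln2_ge. pose proof (ln_le' 2 N ltac:(lra) h). lra. Qed.

Lemma div_le_mul a b c : 0 < c -> a/c <= b -> a <= b*c.
Proof. intros h H. apply Rmult_le_compat_r with (r:=c) in H; [|lra].
replace (a/c*c) with a in H by (field; lra). exact H. Qed.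

Lemma SY_ge N Y : 2 <= N -> 2/(N*N) <= Y -> 1 <= SS N * Y.
Proof.
intros h hY. destruct (SS_lb N h) as (h1 & h2 & h3).
assert (N^6 = (N*N)*(N*N)*(N*N)) by ring.
assert (0 < N*N) by nra.
have H1 := div_le_mul _ _ _ H0 hY.
assert (4 <= N*N) by nra.
assert (4 <= N*N) by nra. assert (16 <= (N*N)*(N*N)) by nra.
assert (4*SS N * (Y*(N*N)) >= (N^6-2)*2) by nra.
nra.
Qed.

Lemma eps_bound N Y eps : 2 <= N -> 0 <= Y <= 2 -> 0 <= eps <= 1 / (2 * ln N) ->
  eps * acosh (1 + SS N * Y) <= 4.
Proof.
intros h hY he. destruct (SS_lb N h) as (h1 & h2 & h3). pose proof (lnN_ge N h).
assert (Q1: 1 <= 1 + SS N * Y) by nra.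
have U := acosh_ub _ Q1.
have G := acosh_ge0 _ Q1.
assert (AL: ln (2 * (1 + SS N * Y)) <= ln (2 * N^6)).
{ apply ln_le'. lra. assert (64 <= N^6) by (replace 64 with (2^6) by (simpl; ring); apply pow_incr; lra). nra. }
have E2 := ln_mult 2 (N^6) ltac:(lra) (pow_lt N 6 ltac:(lra)). rewrite E2 in AL.
have E3 := ln_pow N ltac:(lra) 6. rewrite E3 in AL. simpl INR in AL.
pose proof ln2_ge. pose proof (ln_le' 2 N ltac:(lra) h).
assert (acosh (1 + SS N * Y) <= 7 * ln N) by lra.
assert (eps * (2 * ln N) <= 1).
{ destruct he as [he1 he2]. apply Rmult_le_compat_r with (r := 2 * ln N) in he2; [|lra].
  replace (1 / (2 * ln N) * (2 * ln N)) with 1 in he2 by (field; lra). lra. }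
nra.
Qed.

Lemma step_lb N y : 2 <= N -> 8/(N*N) <= y -> ln (3.9 * N^4) <= acosh (1 + SS N * y).
Proof.
intros h hy. destruct (SS_lb N h) as (h1 & h2 & h3).
assert (0 < N*N) by nra.
have H0' := div_le_mul _ _ _ H hy.
assert (Q1: 1 <= 1 + SS N * y) by nra.
eapply Rle_trans; [|apply acosh_lb2; exact Q1].
apply ln_le'. assert (0 < N^4) by (apply pow_lt; lra). lra.
assert (N^6 = (N*N)*(N*N)*(N*N)) by ring.
assert (N^4 = (N*N)*(N*N)) by ring.
assert (4 <= N*N) by nra. assert (16 <= (N*N)*(N*N)) by nra.
(* 2(1+S y) - 1 = 1 + 2 S y ; 2 S y * N^2 >= 8*2S = 4*4S >= 4(N^6-2) *)
assert (2 * SS N * y * (N*N) >= 4*(N^6 - 2)) by nra.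
assert (0 <= (2 * SS N * y - (4*(N*N)*(N*N) - 2)) * (N*N)) by nra.
assert (0 <= 2 * SS N * y - (4*(N*N)*(N*N) - 2)).
{ apply Rmult_le_reg_r with (N*N); [lra|]. lra. }
nra.
Qed.

Lemma three_step N Y eps : 2 <= N -> 0 <= Y <= 2 -> 0 <= eps <= 1 / (2 * ln N) ->
  (2 + eps) * acosh (1 + SS N * Y) < 3 * ln (3.9 * N^4).
Proof.
intros h hY he. destruct (SS_lb N h) as (h1 & h2 & h3). pose proof (lnN_ge N h).
have I6 := inv6_le N h.
assert (Q1: 1 <= 1 + SS N * Y) by nra.
have U := acosh_ub _ Q1.
have G := acosh_ge0 _ Q1.
assert (A1: ln (2 * (1 + SS N * Y)) <= ln (N^6 * (1 + 1/64))).
{ apply ln_le'. lra. have E := SS_eq N ltac:(lra).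
  assert (2 * (1 + SS N * Y) <= 2 + 4 * SS N) by nra.
  assert (64 <= N^6) by (replace 64 with (2^6) by (simpl; ring); apply pow_incr; lra).
  assert (/ N^6 <= N^6/64).
  { apply Rle_trans with (1/64). lra. apply Rmult_le_compat_r; lra. }
  lra. }
have E2 := ln_mult (N^6) (1+1/64) (pow_lt N 6 ltac:(lra)) ltac:(lra). rewrite E2 in A1.
have E3 := ln_pow N ltac:(lra) 6. rewrite E3 in A1. simpl INR in A1.
have L1 := ln_1px (1/64) ltac:(lra).
have E4 := ln_mult 3.9 (N^4) ltac:(lra) (pow_lt N 4 ltac:(lra)). rewrite E4.
have E5 := ln_pow N ltac:(lra) 4. rewrite E5. simpl INR.
pose proof ln39.
set L := ln N in H A1 L1 he *.
set A := acosh (1 + SS N * Y) in U G *.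
assert (HA: A <= 6 * L + 1/64) by lra.
assert (eps * (2 * L) <= 1).
{ destruct he as [he1 he2]. apply Rmult_le_compat_r with (r := 2 * L) in he2; [|lra].
  replace (1 / (2 * L) * (2 * L)) with 1 in he2 by (field; lra). lra. }
assert (eps <= 1) by nra.
assert (eps * A <= eps * (6*L) + eps/64) by nra.
assert (eps * (6*L) <= 3) by nra.
nra.
Qed.


Fixpoint cmp {n : nat} (x : 'I_n) (s : seq 'I_n) : seq 'I_n :=
  match s with
  | [::] => [::]
  | y :: s' => if y == x then cmp x s' else y :: cmp y s'
  end.

Lemma cmp_path n (E : rel 'I_n) x s : path (adj E) x s -> path (adj E) x (cmp x s).
Proof.
elim: s x => [|y s IH] x //=.
case/andP => h1 h2. case: eqP => [e|ne].
- subst y. by apply: IH.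
- by rewrite /= h1 IH.
Qed.

Lemma cmp_last n x (s : seq 'I_n) : last x (cmp x s) = last x s.
Proof.
elim: s x => [|y s IH] x //=.
case: eqP => [e|ne] /=.
- subst y. by apply: IH.
- by apply: IH.
Qed.

Lemma cmp_noloop n x (s : seq 'I_n) : path (fun a b => a != b) x (cmp x s).
Proof.
elim: s x => [|y s IH] x //=.
case: eqP => [e|ne] /=.
- subst y. by apply: IH.
- apply/andP; split; last by apply: IH. by apply/eqP => e; apply: ne.
Qed.

Lemma cmp_len n (pt : 'I_n -> hpoint) (H0 : forall x, hdist (pt x) (pt x) = 0) x s :
  walk_len pt x (cmp x s) = walk_len pt x s.
Proof.
elim: s x => [|y s IH] x //=.
case: eqP => [e|ne] /=.
- subst y. rewrite H0 Rplus_0_l. by apply: IH.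
- by rewrite IH.
Qed.

Lemma walk_ge0 n (pt : 'I_n -> hpoint) (Hp : forall a b, 0 <= hdist (pt a) (pt b)) x s :
  0 <= walk_len pt x s.
Proof.
elim: s x => [|y s IH] x /=. lra. have := Hp x y. have := IH y. lra.
Qed.

Lemma walk_lb n (pt : 'I_n -> hpoint) Lm (Hp : forall a b, 0 <= hdist (pt a) (pt b))
  (HL : forall a b, a != b -> Lm <= hdist (pt a) (pt b)) x t :
  path (fun a b => a != b) x t -> INR (size t) * Lm <= walk_len pt x t.
Proof.
elim: t x => [|y t IH] x. move=> _ /=. lra.
move=> /andP [h1 h2]. have := IH y h2. have := HL x y h1.
change (size (y :: t)) with (S (size t)). rewrite S_INR. change (walk_len pt x (y :: t)) with (hdist (pt x) (pt y) + walk_len pt y t). lra.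
Qed.


Definition angk {n : nat} (th0 : R) (k : 'I_n) : R := th0 + 2 * PI * INR (nat_of_ord k) / INR n.
Definition yy {n : nat} (th0 : R) (i j : 'I_n) : R := yc (angk th0 i) (angk th0 j).

Lemma hd_eq n th0 (i j : 'I_n) :
  hdist (@equi_pt n (3 * ln (INR n)) th0 i) (@equi_pt n (3 * ln (INR n)) th0 j)
  = acosh (1 + SS (INR n) * yy th0 i j).
Proof. unfold equi_pt. rewrite hdist_circle. reflexivity. Qed.

Lemma yy_diff n th0 (i j : 'I_n) : (0 < n)%N ->
  yy th0 i j = 1 - cos (2 * PI * (INR i - INR j) / INR n).
Proof.
move=> hn. rewrite /yy /yc /angk. do 2 f_equal.
have : INR n <> 0 by apply not_0_INR; lia.
move=> h. field. exact h.
Qed.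

Lemma yy_self n th0 (i : 'I_n) : yy th0 i i = 0.
Proof. rewrite /yy /yc. replace (angk th0 i - angk th0 i) with 0 by ring. rewrite cos_0. ring. Qed.

Lemma yy_sym n th0 (i j : 'I_n) : yy th0 i j = yy th0 j i.
Proof. rewrite /yy. apply yc_sym. Qed.

Lemma yy_range n th0 (i j : 'I_n) : 0 <= yy th0 i j <= 2.
Proof. rewrite /yy /yc. pose proof (COS_bound (angk th0 i - angk th0 j)). lra. Qed.

Lemma INR_ge2 n : (2 <= n)%N -> 2 <= INR n.
Proof. move=> h. replace 2 with (INR 2) by (simpl; ring). apply le_INR. lia. Qed.

Lemma yy_min n th0 (i j : 'I_n) : (2 <= n)%N -> i != j -> 8 / (INR n * INR n) <= yy th0 i j.
Proof.
move=> hn hij.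
have N2 := INR_ge2 n hn.
have hc : INR n = 2 \/ 3 <= INR n.
{ case: (n =P 2)%N => [->|ne]. left; simpl; ring. right. replace 3 with (INR 3) by (simpl; ring). apply le_INR. lia. }
wlog lt : i j hij / (j < i)%N.
{ move=> W. case: (ltngtP j i) => h.
  - by apply: W.
  - rewrite yy_sym. apply: W => //. by rewrite eq_sym.
  - exfalso. move/eqP: hij; apply. by apply: val_inj. }
rewrite yy_diff; last lia.
have Hi := ltn_ord i.
rewrite -minus_INR; last lia.
apply ymin => //.
- replace 1 with (INR 1) by reflexivity. apply le_INR. lia.
- replace (INR n - 1) with (INR (n - 1)). apply le_INR. lia.
  rewrite minus_INR; last lia. simpl. ring.
Qed.


Lemma adj_sym n (E : rel 'I_n) a b : adj E a b = adj E b a.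
Proof. by rewrite /adj orbC. Qed.

Lemma pair_lemma n th0 eps (E : rel 'I_n) Kr (u v : 'I_n) :
  (2 <= n)%N -> 0 <= eps <= 1 / (2 * ln (INR n)) ->
  1 <= Kr -> 2 * Kr <= INR n ->
  yy th0 u v = 1 - cos (2 * PI * Kr / INR n) ->
  u != v ->
  (exists s, path (adj E) u s /\ last u s = v /\
     walk_len (@equi_pt n (3 * ln (INR n)) th0) u s <=
       (2 + eps) * hdist (@equi_pt n (3 * ln (INR n)) th0 u) (@equi_pt n (3 * ln (INR n)) th0 v)) ->
  exists x z, (x = u \/ x = v) /\ adj E x z /\
    1/2 * (Kr / INR n)^2 <= yy th0 x z <= 1568 * (Kr / INR n)^2.
Proof.
move=> hn heps hK1 hK2 hY huv [s [hp [hl hw]]].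
set pt := @equi_pt n (3 * ln (INR n)) th0 in hw.
set N := INR n in heps hK2 hY hw *.
have N2 : 2 <= N by apply: INR_ge2.
set Y := yy th0 u v in hY *.
have [Ylo Yhi] := scale_y Kr N hK1 hK2. rewrite -hY in Ylo Yhi.
have Yr := yy_range _ th0 u v. rewrite -/Y in Yr.
have hSY : 1 <= SS N * Y.
{ apply: SY_ge => //. apply: Rle_trans Ylo.
  have h0 : 1/N <= Kr/N by apply Rmult_le_compat_r; [apply Rlt_le, Rinv_0_lt_compat; lra| lra].
  have h1 : 0 <= 1/N by apply Rlt_le, Rdiv_lt_0_compat; lra.
  have := pow_incr (1/N) (Kr/N) 2 (conj h1 h0).
  have -> : 2 / (N*N) = 2 * (1/N)^2 by field; lra.
  lra. }
have H0 : forall x, hdist (pt x) (pt x) = 0.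
{ move=> x. rewrite /pt hd_eq -/N yy_self Rmult_0_r Rplus_0_r. apply acosh_1. }
have Hp : forall a b, 0 <= hdist (pt a) (pt b).
{ move=> a b. rewrite /pt hd_eq -/N. apply acosh_ge0. have [r1 _] := yy_range _ th0 a b.
  have [_ [_ h3]] := SS_lb N N2. nra. }
set t := cmp u s.
have tp : path (adj E) u t by apply: cmp_path.
have tl : last u t = v by rewrite /t cmp_last.
have tn : path (fun a b => a != b) u t by apply: cmp_noloop.
have tw : walk_len pt u t <= (2 + eps) * acosh (1 + SS N * Y).
{ rewrite /t cmp_len //. rewrite /pt hd_eq -/N -/Y in hw. exact hw. }
have SSp : 0 < SS N by have := SS_lb N N2; lra.
move: t tp tl tn tw => t.
case: t => [|a [|b [|c t]]].
- move=> _ /= e. by move: huv; rewrite e eqxx.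
- move=> /= /andP [ha _] e _ _. subst a. exists u, v. split; [by left|]. split => //.
  rewrite -/Y. lra.
- move=> hp2 e tn2 tw.
  have ha : adj E u a by case/andP: hp2.
  have hb : adj E a b by move: hp2 => /andP [_ /andP [? _]].
  have na : u != a by case/andP: tn2.
  have eb : b = v by exact e. subst b.
  have tw2 : hdist (pt u) (pt a) + (hdist (pt a) (pt v) + 0) <= (2 + eps) * acosh (1 + SS N * Y) := tw.
  clear tw. rename tw2 into tw.
  rewrite /pt !hd_eq -/N in tw. rewrite Rplus_0_r in tw.
  set ya := yy th0 u a in tw. set yb := yy th0 a v in tw.
  have [ra1 ra2] := yy_range _ th0 u a. have [rb1 rb2] := yy_range _ th0 a v.
  have prod : ya * yb <= 1296 * Y^2.
  { apply: (two_step (SS N) Y ya yb eps) => //; try lra.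
    apply: eps_bound => //. }
  have T1 : Y <= ya + yb + 2 * sqrt (ya * yb) by apply: chord_tri.
  have T2 : ya <= Y + yb + 2 * sqrt (Y * yb).
  { rewrite /ya /Y /yb (yy_sym _ th0 a v). apply: chord_tri. }
  have T3 : yb <= Y + ya + 2 * sqrt (Y * ya).
  { have h := chord_tri (angk th0 a) (angk th0 u) (angk th0 v).
    rewrite (yc_sym (angk th0 a) (angk th0 u)) (Rmult_comm (yc (angk th0 u) (angk th0 a))) in h.
    rewrite /ya /Y /yb /yy. lra. }
  have Yp : 0 <= Y by lra.
  case: (Rle_or_lt yb ya) => hab.
  + have [m1 m2] := max_bounds ya yb Y ra1 rb1 Yp hab prod T1 T2.
    exists u, a. split; [by left|]. split => //. rewrite -/ya. lra.
  + have prod' : yb * ya <= 1296 * Y^2 by rewrite (Rmult_comm yb ya).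
    have T1' : Y <= yb + ya + 2 * sqrt (yb * ya) by rewrite (Rmult_comm yb ya); lra.
    have [m1 m2] := max_bounds yb ya Y rb1 ra1 Yp (Rlt_le _ _ hab) prod' T1' T3.
    exists v, a. split; [by right|]. split; first by rewrite adj_sym.
    rewrite yy_sym -/yb. lra.
- move=> _ _ tn tw. exfalso.
  have HL : forall x y, x != y -> ln (3.9 * N^4) <= hdist (pt x) (pt y).
  { move=> x y hxy. rewrite /pt hd_eq -/N. apply: step_lb => //. by apply: yy_min. }
  have := @walk_lb n pt _ Hp HL u _ tn.
  have Lp : 0 < ln (3.9 * N^4).
  { rewrite -ln_1. apply ln_increasing. lra. have : 16 <= N^4.
    replace 16 with (2^4) by (simpl; ring). apply pow_incr; lra. lra. }
  have := three_step N Y eps N2 ltac:(lra) heps.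
  change (size [:: a, b, c & t]) with (3 + size t)%nat. rewrite plus_INR.
  have := pos_INR (size t). simpl INR. nra.
Qed.


Lemma INR_expn b k : INR (b ^ k)%N = INR b ^ k.
Proof. elim: k => [|k IH]. by rewrite expn0 /=. rewrite expnS -multE mult_INR IH /=. ring. Qed.
Lemma INR_muln a b : INR (a * b)%N = INR a * INR b.
Proof. by rewrite -multE mult_INR. Qed.

Definition rleb (a b : R) : bool := if Rle_dec a b then true else false.
Lemma rlebP a b : reflect (a <= b) (rleb a b).
Proof. rewrite /rleb. case: Rle_dec => h; constructor => //. Qed.

Lemma sh_yy n th0 K (hK : (K <= n)%N) (u : 'I_n) : (0 < n)%N ->
  yy th0 u (sh hK u) = 1 - cos (2 * PI * INR K / INR n).
Proof.
move=> hn. rewrite yy_diff //. have hN : INR n <> 0 by apply not_0_INR; lia.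
rewrite /sh /=. have := ltn_ord u. case: ifP => h hu.
- rewrite plus_INR. replace (2 * PI * (INR u - (INR u + INR K)) / INR n) with (- (2 * PI * INR K / INR n)) by (field; exact hN).
  by rewrite cos_neg.
- rewrite minus_INR; last lia. rewrite plus_INR.
  replace (2 * PI * (INR u - (INR u + INR K - INR n)) / INR n) with (2 * PI - 2 * PI * INR K / INR n) by (field; exact hN).
  rewrite cos_minus cos_2PI sin_2PI. f_equal. ring.
Qed.

Theorem mainTheorem6 :
  exists c : R, 0 < c /\
    forall (n : nat) (eps th0 : R) (E : rel 'I_n),
      (2 <= n)%N ->
      0 <= eps <= 1 / (2 * ln (INR n)) ->
      is_spanner (@equi_pt n (3 * ln (INR n)) th0) E (2 + eps) ->
      c * INR n * ln (INR n) <= INR (num_edges E).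
Proof.
exists (1/28). split; first lra.
move=> n eps th0 E hn heps hsp.
have N2 := INR_ge2 n hn.
have exP : exists m, (n < 2 * 64 ^ m)%N.
{ exists n. have := ltn_expl n (isT : (1 < 64)%N). lia. }
case: (ex_minnP exP) => m hm hmin.
have hjm : forall j, (j < m)%N -> (2 * 64 ^ j <= n)%N.
{ move=> j hj. case: (leqP (2 * 64 ^ j) n) => // h. have := hmin j h. lia. }
have m1 : (1 <= m)%N.
{ case: m hm {hmin hjm} => [|m'] //. rewrite expn0. lia. }
set P := fun j (x z : 'I_n) =>
  rleb (1/2 * (INR (64 ^ j) / INR n)^2) (yy th0 x z) && rleb (yy th0 x z) (1568 * (INR (64 ^ j) / INR n)^2).
have Kpos : forall j, 0 < INR (64 ^ j)%N / INR n.
{ move=> j. apply Rdiv_lt_0_compat; last lra. apply lt_0_INR. apply/ltP. by rewrite expn_gt0. }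
have Hdis : forall j j' x z, P j x z -> P j' x z -> j = j'.
{ suff W : forall j j' x z, (j < j')%N -> P j x z -> P j' x z -> False.
  { move=> j j' x z h1 h2. case: (ltngtP j j') => h.
    - by case: (W _ _ _ _ h h1 h2).
    - by case: (W _ _ _ _ h h2 h1).
    - exact h. }
  move=> j j' x z hjj /andP [/rlebP a1 /rlebP a2] /andP [/rlebP b1 /rlebP b2].
  have e : (64 * 64 ^ j <= 64 ^ j')%N by rewrite -expnS; apply: leq_pexp2l.
  have e' : 64 * INR (64 ^ j)%N <= INR (64 ^ j')%N.
  { replace 64 with (INR 64) by (simpl; ring). rewrite -INR_muln. apply le_INR. by apply/leP. }
  have kp := Kpos j.
  have : 64 * (INR (64 ^ j)%N / INR n) <= INR (64 ^ j')%N / INR n.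
  { rewrite -Rmult_assoc /Rdiv. apply Rmult_le_compat_r => //. apply Rlt_le, Rinv_0_lt_compat; lra. }
  move=> h. have := pow_incr _ _ 2 (conj (Rlt_le _ _ (Rmult_lt_0_compat 64 _ ltac:(lra) kp)) h).
  have : (64 * (INR (64 ^ j)%N / INR n)) ^ 2 = 4096 * (INR (64 ^ j)%N / INR n) ^ 2 by ring.
  have : 0 < (INR (64 ^ j)%N / INR n) ^ 2 by apply pow_lt.
  lra. }
have Hcount : forall j, (j < m)%N -> (n <= 4 * #|Eset E (P j)|)%N.
{ move=> j hj. have h2 := hjm j hj.
  have hK : (64 ^ j <= n)%N by lia.
  have Kg : (1 <= 64 ^ j)%N by rewrite expn_gt0.
  apply: (@count_scale n E (P j) (64 ^ j)%N hK).
  - move=> x z. by rewrite /P yy_sym.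
  - move=> x. rewrite /P yy_self. apply/negP => /andP [/rlebP h _].
    have := Kpos j. have := pow_lt _ 2 (Kpos j). lra.
  - move=> u.
    have hK1 : 1 <= INR (64 ^ j)%N by replace 1 with (INR 1) by reflexivity; apply le_INR; apply/leP.
    have hK2 : 2 * INR (64 ^ j)%N <= INR n.
    { replace 2 with (INR 2) by (simpl; ring). rewrite -INR_muln. apply le_INR. by apply/leP. }
    have hy := @sh_yy n th0 _ hK u (ltnW hn).
    have hne : u != sh hK u. { rewrite eq_sym. apply: sh_neq. lia. }
    have [x [z [hx [ha [hb1 hb2]]]]] := pair_lemma n th0 eps E _ u (sh hK u) hn heps hK1 hK2 hy hne (hsp u (sh hK u)).
    exists x, z. split => //. split => //. rewrite /P. apply/andP; split; by apply/rlebP. }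
have hnum := sum_scales Hdis Hcount.
have R1 : INR m * INR n <= 4 * INR (num_edges E).
{ rewrite -INR_muln. replace 4 with (INR 4) by (simpl; ring). rewrite -INR_muln. apply le_INR. by apply/leP. }
have Hln : ln (INR n) <= 7 * INR m.
{ have hm' : INR n <= 2 * 64 ^ m.
  { replace 64 with (INR 64) by (simpl; ring). rewrite -INR_expn. replace 2 with (INR 2) by (simpl; ring).
    rewrite -INR_muln. apply le_INR. apply/leP. exact: ltnW. }
  have := ln_le' (INR n) _ ltac:(lra) hm'.
  rewrite ln_mult; [|lra|apply pow_lt; lra]. rewrite ln_pow; last lra.
  replace 64 with (2^6) by (simpl; ring). rewrite ln_pow; last lra.
  have l2 : ln 2 < 1.
  { rewrite -(ln_exp 1). apply ln_increasing. lra. have := exp_ineq1 1 ltac:(lra). lra. }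
  have l0 : 0 < ln 2 by rewrite -ln_1; apply ln_increasing; lra.
  have : 1 <= INR m by replace 1 with (INR 1) by reflexivity; apply le_INR; apply/leP.
  simpl INR. nra. }
have := lnN_ge _ N2. nra.
Qed.
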